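(* Assume $h_0\neq0$, $h_1\neq0$ and $h_0x+h_1y>0$ for all $(x,y)\in D$. For each $(a,b)\in\{-,+\}^2$, the number $$t_{ab}=\begin{cases}1,&\text{if } 1\le\alpha_{ab}\ \text{or}\ 1\le2\beta_{ab}-\alpha_{ab},\\ 0,&\text{if } \beta_{ab}\le\alpha_{ab}\le0\ \text{or}\ \beta_{ab}<2\beta_{ab}-\alpha_{ab}\le0,\\ \alpha_{ab},&\text{if } 0<\alpha_{ab}<1,\\ 2\beta_{ab}-\alpha_{ab},&\text{if } 0<2\beta_{ab}-\alpha_{ab}<1\end{cases}$$ is a minimizer of $\varphi_{ab}$ on $[0,1]$. Moreover $$\min_{(x,y)\in D}\psi(x,y)=\min_{(a,b)\in\{-,+\}^2}\varphi_{ab}(t_{ab}).$$ If $(a^*,b^* )$ attains the latter minimum, then the point of $\partial D$ corresponding to parameter $t_{a^*b^*}$ on the side parametrized by $\varphi_{a^*b^*}$ is a minimizer of $\psi$ on $D$.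
   Context: Let $0<\mu_-<\mu_+$ and $0<\sigma_-<\sigma_+$ be real numbers, $D=[\mu_-,\mu_+]\times[\sigma_-,\sigma_+]$, and $h_0,h_1\in\mathbb R$. Write $\mu_M=(\mu_++\mu_-)/2$ and $\sigma_M=(\sigma_++\sigma_-)/2$. For $(x,y)\in D$ let $$\psi(x,y)=\frac{(h_0x+h_1y)^2}{2\mu_Mx+2\sigma_My-\mu_-\mu_+-\sigma_-\sigma_+}.$$ The four sides of $\partial D$ are parametrized by $t\in[0,1]$ through the following functions. For $a\in\{-,+\}$: - $\varphi_{-a}(t)=\psi(\mu_a,\ \sigma_-+t(\sigma_+-\sigma_-))$, the side $x=\mu_a$; - $\alpha_{-a}=-\frac{h_0\mu_a+h_1\sigma_-}{h_1(\sigma_+-\sigma_-)}$; - $\beta_{-a}=-\frac{\mu_a^2+\sigma_-^2}{\sigma_+^2-\sigma_-^2}$. For $b\in\{-,+\}$: - $\varphi_{+b}(t)=\psi(\mu_-+t(\mu_+-\mu_-),\ \sigma_b)$, the side $y=\sigma_b$; - $\alpha_{+b}=-\frac{h_0\mu_-+h_1\sigma_b}{h_0(\mu_+-\mu_-)}$; - $\beta_{+b}=-\frac{\mu_-^2+\sigma_b^2}{\mu_+^2-\mu_-^2}$. *)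

(* Defs.v *)
From Stdlib Require Import Reals Lra Bool.
Open Scope R_scope.
Open Scope bool_scope.

(* Signs {-,+} are encoded as bool: false = "-", true = "+". *)

(* The four sides of the boundary of D:
   Vert a  corresponds to the index "-a" (side x = mu_a),
   Horiz b corresponds to the index "+b" (side y = sigma_b). *)
Inductive side : Set := Vert (a : bool) | Horiz (b : bool).

Section Defs.
Variables (mum mup sm sp h0 h1 : R).

Definition muM : R := (mup + mum) / 2.
Definition sM : R := (sp + sm) / 2.

Definition mu (a : bool) : R := if a then mup else mum.
Definition sg (b : bool) : R := if b then sp else sm.

Definition inD (x y : R) : Prop := mum <= x <= mup /\ sm <= y <= sp.

Definition psi (x y : R) : R :=
  (h0 * x + h1 * y) ^ 2 / (2 * muM * x + 2 * sM * y - mum * mup - sm * sp).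

Definition bpoint (k : side) (t : R) : R * R :=
  match k with
  | Vert a => (mu a, sm + t * (sp - sm))
  | Horiz b => (mum + t * (mup - mum), sg b)
  end.

Definition phi (k : side) (t : R) : R := psi (fst (bpoint k t)) (snd (bpoint k t)).

Definition alpha (k : side) : R :=
  match k with
  | Vert a => - (h0 * mu a + h1 * sm) / (h1 * (sp - sm))
  | Horiz b => - (h0 * mum + h1 * sg b) / (h0 * (mup - mum))
  end.

Definition beta (k : side) : R :=
  match k with
  | Vert a => - (mu a ^ 2 + sm ^ 2) / (sp ^ 2 - sm ^ 2)
  | Horiz b => - (mum ^ 2 + sg b ^ 2) / (mup ^ 2 - mum ^ 2)
  end.

Definition Rleb (x y : R) : bool := if Rle_dec x y then true else false.
Definition Rltb (x y : R) : bool := if Rlt_dec x y then true else false.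

(* The case-defined number t_{ab}; the cases are tested in the order of the
   paper (for the actual alpha, beta they are exhaustive and consistent,
   since beta < 0), the last case being the remaining one. *)
Definition tcase (al be : R) : R :=
  if Rleb 1 al || Rleb 1 (2 * be - al) then 1
  else if (Rleb be al && Rleb al 0) || (Rltb be (2 * be - al) && Rleb (2 * be - al) 0) then 0
  else if Rltb 0 al && Rltb al 1 then al
  else 2 * be - al.

Definition tab (k : side) : R := tcase (alpha k) (beta k).

Definition minval : R :=
  Rmin (Rmin (phi (Vert false) (tab (Vert false))) (phi (Vert true) (tab (Vert true))))
       (Rmin (phi (Horiz false) (tab (Horiz false))) (phi (Horiz true) (tab (Horiz true)))).

End Defs.

(* Main.v *)
Require Import Defs.
From Stdlib Require Import Reals Lra Psatz.
Open Scope R_scope.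

Lemma div_le (a b c d : R) : 0 < b -> 0 < d -> a * d <= c * b -> a / b <= c / d.
Proof.
  intros Hb Hd H.
  replace (a / b) with ((a * d) * / (b * d)) by (field; lra).
  replace (c / d) with ((c * b) * / (b * d)) by (field; lra).
  apply Rmult_le_compat_r; [left; apply Rinv_0_lt_compat; nra | exact H].
Qed.

Lemma poly_key (al be u s : R) :
  0 <= (s - u) * ((s - be) * (u - be) - (al - be) ^ 2) ->
  (u - al) ^ 2 * (s - be) <= (s - al) ^ 2 * (u - be).
Proof. intros H. nra. Qed.

Lemma nn (a b : R) : a <= 0 -> b <= 0 -> 0 <= a * b.
Proof. intros; nra. Qed.
Lemma pp (a b : R) : 0 <= a -> 0 <= b -> 0 <= a * b.
Proof. intros; nra. Qed.

Lemma g_min (al be s : R) : be < 0 -> 0 <= s <= 1 ->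
  0 <= tcase al be <= 1 /\
  (tcase al be - al) ^ 2 / (tcase al be - be) <= (s - al) ^ 2 / (s - be).
Proof.
  intros Hb Hs. unfold tcase, Rleb, Rltb.
  destruct (Rle_dec 1 al) as [H1|H1]; cbn [orb andb].
  { split; [lra|]. apply div_le; [lra|lra|]. apply poly_key.
    apply nn; [lra|]. assert ((s - be) * (1 - be) <= (1-be)*(1-be)) by nra. nra. }
  destruct (Rle_dec 1 (2*be-al)) as [H2|H2]; cbn [orb andb].
  { split; [lra|]. apply div_le; [lra|lra|]. apply poly_key.
    apply nn; [lra|]. assert ((s - be) * (1 - be) <= (1-be)*(1-be)) by nra. nra. }
  destruct (Rle_dec be al) as [H3|H3]; destruct (Rle_dec al 0) as [H4|H4]; cbn [orb andb].
  { split; [lra|]. apply div_le; [lra|lra|]. apply poly_key.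
    apply pp; [lra|]. assert ((-be) * (-be) <= (s - be) * (0 - be)) by nra. nra. }
  all: destruct (Rlt_dec be (2*be-al)) as [H5|H5]; destruct (Rle_dec (2*be-al) 0) as [H6|H6]; cbn [orb andb].
  all: try (split; [lra|]; apply div_le; [lra|lra|]; apply poly_key;
    apply pp; [lra|]; assert ((-be) * (-be) <= (s - be) * (0 - be)) by nra; nra).
  all: destruct (Rlt_dec 0 al) as [H7|H7]; destruct (Rlt_dec al 1) as [H8|H8]; cbn [orb andb]; try lra.
  all: try (split; [lra|]; apply div_le; [lra|lra|]; apply poly_key;
    replace ((s - al) * ((s - be) * (al - be) - (al - be) ^ 2)) with ((al-be)*((s-al)*(s-al))) by ring;
    apply pp; [lra|apply Rle_0_sqr]).
  all: split; [lra|]; apply div_le; [lra|lra|]; apply poly_key;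
    replace ((s - (2*be-al)) * ((s - be) * ((2*be-al) - be) - (al - be) ^ 2)) with ((be-al)*((s-(2*be-al))*(s-(2*be-al)))) by ring;
    apply pp; [lra|apply Rle_0_sqr].
Qed.

Lemma phi_form (mum mup sm sp h0 h1 : R) (k : side) :
  0 < mum < mup -> 0 < sm < sp -> h0 <> 0 -> h1 <> 0 ->
  exists c1 c2, 0 < c2 /\ forall t,
    h0 * fst (bpoint mum mup sm sp k t) + h1 * snd (bpoint mum mup sm sp k t)
      = c1 * (t - alpha mum mup sm sp h0 h1 k) /\
    2 * muM mum mup * fst (bpoint mum mup sm sp k t) + 2 * sM sm sp * snd (bpoint mum mup sm sp k t)
      - mum * mup - sm * sp = c2 * (t - beta mum mup sm sp k).
Proof.
  intros Hmu Hs H0 H1.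
  destruct k as [a|b].
  - exists (h1 * (sp - sm)), (sp^2 - sm^2). split; [nra|]. intros t.
    unfold bpoint, alpha, beta, muM, sM, mu; cbn [fst snd].
    split; destruct a; field; repeat apply conj; try lra; try nra.
  - exists (h0 * (mup - mum)), (mup^2 - mum^2). split; [nra|]. intros t.
    unfold bpoint, alpha, beta, muM, sM, sg; cbn [fst snd].
    split; destruct b; field; repeat apply conj; try lra; try nra.
Qed.

Lemma beta_neg (mum mup sm sp : R) (k : side) :
  0 < mum < mup -> 0 < sm < sp -> beta mum mup sm sp k < 0.
Proof.
  intros Hmu Hs. destruct k as [a|b]; unfold beta, mu, sg.
  - assert (0 < mu mum mup a ^ 2 + sm ^2) by (unfold mu; destruct a; nra).
    unfold mu in H. unfold Rdiv. rewrite <- Ropp_mult_distr_l.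
    apply Ropp_lt_gt_0_contravar. apply Rmult_lt_0_compat; [lra|]. apply Rinv_0_lt_compat; nra.
  - assert (0 < mum ^ 2 + sg sm sp b ^2) by (unfold sg; destruct b; nra).
    unfold sg in H. unfold Rdiv. rewrite <- Ropp_mult_distr_l.
    apply Ropp_lt_gt_0_contravar. apply Rmult_lt_0_compat; [lra|]. apply Rinv_0_lt_compat; nra.
Qed.

Lemma part1 (mum mup sm sp h0 h1 : R) (k : side) :
  0 < mum < mup -> 0 < sm < sp -> h0 <> 0 -> h1 <> 0 ->
  0 <= tab mum mup sm sp h0 h1 k <= 1 /\
  forall s, 0 <= s <= 1 ->
    phi mum mup sm sp h0 h1 k (tab mum mup sm sp h0 h1 k) <= phi mum mup sm sp h0 h1 k s.
Proof.
  intros Hmu Hs H0 H1.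
  pose proof (beta_neg mum mup sm sp k Hmu Hs) as Hb.
  destruct (phi_form mum mup sm sp h0 h1 k Hmu Hs H0 H1) as [c1 [c2 [Hc2 Hf]]].
  pose proof (g_min (alpha mum mup sm sp h0 h1 k) (beta mum mup sm sp k) 0 Hb ltac:(lra)) as [Ht _].
  unfold tab. split; [exact Ht|].
  intros s Hs'.
  destruct (g_min (alpha mum mup sm sp h0 h1 k) (beta mum mup sm sp k) s Hb Hs') as [_ Hg].
  set (al := alpha mum mup sm sp h0 h1 k) in *.
  set (be := beta mum mup sm sp k) in *.
  set (t := tcase al be) in *.
  unfold phi, psi. destruct (Hf t) as [Lt Qt]. destruct (Hf s) as [Ls Qs].
  rewrite Lt, Qt, Ls, Qs.
  replace ((c1 * (t - al)) ^ 2 / (c2 * (t - be))) with ((c1^2/c2) * ((t - al)^2 / (t - be))) by (field; lra).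
  replace ((c1 * (s - al)) ^ 2 / (c2 * (s - be))) with ((c1^2/c2) * ((s - al)^2 / (s - be))) by (field; lra).
  apply Rmult_le_compat_l; [|exact Hg].
  unfold Rdiv. apply Rmult_le_pos; [nra|left; apply Rinv_0_lt_compat; lra].
Qed.

Lemma exit1 (a1 a2 x e : R) : a1 <= x <= a2 -> e <> 0 ->
  exists tau, 0 <= tau /\ (x + tau * e = a1 \/ x + tau * e = a2) /\
    forall t, 0 <= t <= tau -> a1 <= x + t * e <= a2.
Proof.
  intros Hx He. destruct (Rlt_or_le 0 e) as [Hp|Hn].
  - exists ((a2 - x) / e). assert (E : (a2 - x) / e * e = a2 - x) by (field; lra).
    split. { unfold Rdiv. apply Rmult_le_pos; [lra|left; apply Rinv_0_lt_compat; lra]. }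
    split; [right; lra|]. intros t Ht.
    assert (t * e <= (a2 - x) / e * e) by (apply Rmult_le_compat_r; lra).
    assert (0 <= t * e) by nra. lra.
  - assert (Hn' : e < 0) by lra.
    exists ((a1 - x) / e). assert (E : (a1 - x) / e * e = a1 - x) by (field; lra).
    split. { replace ((a1 - x) / e) with ((x - a1) * / (- e)) by (field; lra).
             apply Rmult_le_pos; [lra|left; apply Rinv_0_lt_compat; lra]. }
    split; [left; lra|]. intros t Ht.
    assert ((a1 - x) / e * e <= t * e) by nra.
    assert (t * e <= 0) by nra. lra.
Qed.

Lemma exit2 (a1 a2 b1 b2 x y e1 e2 : R) :
  a1 <= x <= a2 -> b1 <= y <= b2 -> (e1 <> 0 \/ e2 <> 0) ->
  exists t, 0 <= t /\ a1 <= x + t * e1 <= a2 /\ b1 <= y + t * e2 <= b2 /\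
    (x + t * e1 = a1 \/ x + t * e1 = a2 \/ y + t * e2 = b1 \/ y + t * e2 = b2).
Proof.
  intros Hx Hy He.
  destruct (Req_dec e1 0) as [E1|E1]; destruct (Req_dec e2 0) as [E2|E2].
  - exfalso; destruct He; contradiction.
  - destruct (exit1 b1 b2 y e2 Hy E2) as [tau [Ht [Hb Hr]]].
    exists tau. subst e1. rewrite Rmult_0_r, Rplus_0_r. specialize (Hr tau ltac:(lra)).
    repeat split; try lra; tauto.
  - destruct (exit1 a1 a2 x e1 Hx E1) as [tau [Ht [Hb Hr]]].
    exists tau. subst e2. rewrite Rmult_0_r, Rplus_0_r. specialize (Hr tau ltac:(lra)).
    repeat split; try lra; tauto.
  - destruct (exit1 a1 a2 x e1 Hx E1) as [t1 [Ht1 [Hb1 Hr1]]].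
    destruct (exit1 b1 b2 y e2 Hy E2) as [t2 [Ht2 [Hb2 Hr2]]].
    destruct (Rle_dec t1 t2).
    + exists t1. specialize (Hr1 t1 ltac:(lra)). specialize (Hr2 t1 ltac:(lra)).
      repeat split; try lra; tauto.
    + exists t2. specialize (Hr1 t2 ltac:(lra)). specialize (Hr2 t2 ltac:(lra)).
      repeat split; try lra; tauto.
Qed.

Lemma Q_pos (mum mup sm sp x y : R) : 0 < mum < mup -> 0 < sm < sp ->
  inD mum mup sm sp x y ->
  0 < 2 * muM mum mup * x + 2 * sM sm sp * y - mum * mup - sm * sp.
Proof.
  intros Hmu Hs [Hx Hy]. unfold muM, sM.
  assert (0 <= (mup + mum) * (x - mum)) by nra.
  assert (0 <= (sp + sm) * (y - sm)) by nra. nra.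
Qed.

Lemma reduce (mum mup sm sp h0 h1 x y : R)
  (Hmu : 0 < mum < mup) (Hsig : 0 < sm < sp)
  (Hpos : forall x y, inD mum mup sm sp x y -> 0 < h0 * x + h1 * y) :
  inD mum mup sm sp x y ->
  exists x' y', inD mum mup sm sp x' y' /\
    (x' = mum \/ x' = mup \/ y' = sm \/ y' = sp) /\
    psi mum mup sm sp h0 h1 x' y' <= psi mum mup sm sp h0 h1 x y.
Proof.
  intros HD.
  pose proof (Hpos x y HD) as HL0. pose proof (Q_pos _ _ _ _ x y Hmu Hsig HD) as HQ0.
  set (mM := muM mum mup) in *. set (sMM := sM sm sp) in *.
  set (L0 := h0 * x + h1 * y) in *.
  set (Q0 := 2 * mM * x + 2 * sMM * y - mum * mup - sm * sp) in *.
  set (A := h0 * Q0 - 2 * mM * L0). set (B := h1 * Q0 - 2 * sMM * L0).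
  set (dl := h0 * sMM - h1 * mM).
  assert (HAB : A <> 0 \/ B <> 0).
  { destruct (Req_dec A 0) as [EA|EA]; [|left; exact EA].
    destruct (Req_dec B 0) as [EB|EB]; [|right; exact EB].
    exfalso.
    assert (Id : x * A + y * B = - L0 * (mum * mup + sm * sp)) by (unfold A, B, Q0, L0; ring).
    rewrite EA, EB in Id. assert (0 < L0 * (mum * mup + sm * sp)) by (apply Rmult_lt_0_compat; [lra|nra]). lra. }
  assert (HAB' : forall s : R, s <> 0 -> s * B <> 0 \/ - s * A <> 0).
  { intros s Hs0. destruct HAB as [H|H]; [right|left]; intro C.
    - apply Rmult_integral in C; destruct C as [C|C]; [lra|contradiction].
    - apply Rmult_integral in C; destruct C as [C|C]; [contradiction|lra]. }
  set (sgn := if Rle_dec 0 dl then 1 else -1).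
  assert (Hsgn : sgn <> 0) by (unfold sgn; destruct (Rle_dec 0 dl); lra).
  assert (Hdir : 0 <= sgn * dl) by (unfold sgn; destruct (Rle_dec 0 dl); lra).
  destruct HD as [Hx Hy].
  destruct (exit2 mum mup sm sp x y (sgn * B) (- sgn * A) Hx Hy (HAB' sgn Hsgn))
    as [t [Ht [Hx' [Hy' Hb]]]].
  exists (x + t * (sgn * B)), (y + t * (- sgn * A)).
  assert (HD' : inD mum mup sm sp (x + t * (sgn * B)) (y + t * (- sgn * A))) by (split; assumption).
  split; [exact HD'|]. split; [exact Hb|].
  pose proof (Hpos _ _ HD') as HL1. pose proof (Q_pos _ _ _ _ _ _ Hmu Hsig HD') as HQ1.
  fold mM sMM in HQ1.
  set (x1 := x + t * (sgn * B)) in *. set (y1 := y + t * (- sgn * A)) in *.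
  set (L1 := h0 * x1 + h1 * y1) in *.
  set (Q1 := 2 * mM * x1 + 2 * sMM * y1 - mum * mup - sm * sp) in *.
  assert (E : L1 * Q0 = L0 * Q1) by (unfold L1, Q1, x1, y1, A, B, Q0, L0; ring).
  assert (EL : L1 - L0 = - 2 * L0 * (t * (sgn * dl))) by (unfold L1, x1, y1, A, B, dl, Q0, L0; ring).
  assert (Hle : L1 <= L0).
  { assert (0 <= t * (sgn * dl)) by (apply Rmult_le_pos; lra). nra. }
  unfold psi. fold mM sMM. fold L0 L1 Q0 Q1.
  apply div_le; [exact HQ1|exact HQ0|].
  assert (L1 ^ 2 * Q0 = L1 * (L0 * Q1)) by (rewrite <- E; ring).
  rewrite H. assert (0 < L0 * Q1) by nra. nra.
Qed.

Lemma minval_le (mum mup sm sp h0 h1 : R) (k : side) :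
  minval mum mup sm sp h0 h1 <= phi mum mup sm sp h0 h1 k (tab mum mup sm sp h0 h1 k).
Proof.
  unfold minval. destruct k as [[|]|[|]].
  - eapply Rle_trans; [apply Rmin_l|apply Rmin_r].
  - eapply Rle_trans; [apply Rmin_l|apply Rmin_l].
  - eapply Rle_trans; [apply Rmin_r|apply Rmin_r].
  - eapply Rle_trans; [apply Rmin_r|apply Rmin_l].
Qed.

Lemma rmin4 (a b c d : R) :
  Rmin (Rmin a b) (Rmin c d) = a \/ Rmin (Rmin a b) (Rmin c d) = b \/
  Rmin (Rmin a b) (Rmin c d) = c \/ Rmin (Rmin a b) (Rmin c d) = d.
Proof.
  unfold Rmin. destruct (Rle_dec a b); destruct (Rle_dec c d);
  match goal with |- context [Rle_dec ?u ?v] => destruct (Rle_dec u v) end; tauto.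
Qed.

Lemma minval_att (mum mup sm sp h0 h1 : R) :
  exists k, phi mum mup sm sp h0 h1 k (tab mum mup sm sp h0 h1 k) = minval mum mup sm sp h0 h1.
Proof.
  unfold minval.
  destruct (rmin4 (phi mum mup sm sp h0 h1 (Vert false) (tab mum mup sm sp h0 h1 (Vert false)))
    (phi mum mup sm sp h0 h1 (Vert true) (tab mum mup sm sp h0 h1 (Vert true)))
    (phi mum mup sm sp h0 h1 (Horiz false) (tab mum mup sm sp h0 h1 (Horiz false)))
    (phi mum mup sm sp h0 h1 (Horiz true) (tab mum mup sm sp h0 h1 (Horiz true))))
    as [E|[E|[E|E]]]; rewrite E; eexists; reflexivity.
Qed.

Lemma bpoint_inD (mum mup sm sp : R) (k : side) (t : R) :
  0 < mum < mup -> 0 < sm < sp -> 0 <= t <= 1 ->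
  inD mum mup sm sp (fst (bpoint mum mup sm sp k t)) (snd (bpoint mum mup sm sp k t)).
Proof.
  intros Hmu Hs Ht. destruct k as [a|b]; unfold inD, bpoint, mu, sg; cbn [fst snd].
  - destruct a; split; split; nra.
  - destruct b; split; split; nra.
Qed.

Lemma boundary_ge (mum mup sm sp h0 h1 x y : R)
  (Hmu : 0 < mum < mup) (Hsig : 0 < sm < sp) (Hh0 : h0 <> 0) (Hh1 : h1 <> 0) :
  inD mum mup sm sp x y -> (x = mum \/ x = mup \/ y = sm \/ y = sp) ->
  minval mum mup sm sp h0 h1 <= psi mum mup sm sp h0 h1 x y.
Proof.
  intros [Hx Hy] Hb.
  assert (G : forall k s, 0 <= s <= 1 -> fst (bpoint mum mup sm sp k s) = x ->
     snd (bpoint mum mup sm sp k s) = y -> minval mum mup sm sp h0 h1 <= psi mum mup sm sp h0 h1 x y).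
  { intros k s Hs E1 E2. eapply Rle_trans; [apply (minval_le _ _ _ _ _ _ k)|].
    destruct (part1 mum mup sm sp h0 h1 k Hmu Hsig Hh0 Hh1) as [_ P].
    eapply Rle_trans; [apply (P s Hs)|]. unfold phi. rewrite E1, E2. lra. }
  assert (Sy : 0 <= (y - sm) / (sp - sm) <= 1).
  { split; [unfold Rdiv; apply Rmult_le_pos; [lra|left; apply Rinv_0_lt_compat; lra]|].
    apply (Rmult_le_reg_r (sp - sm)); [lra|]. unfold Rdiv. rewrite Rmult_assoc, Rinv_l; lra. }
  assert (Sx : 0 <= (x - mum) / (mup - mum) <= 1).
  { split; [unfold Rdiv; apply Rmult_le_pos; [lra|left; apply Rinv_0_lt_compat; lra]|].
    apply (Rmult_le_reg_r (mup - mum)); [lra|]. unfold Rdiv. rewrite Rmult_assoc, Rinv_l; lra. }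
  destruct Hb as [E|[E|[E|E]]].
  - apply (G (Vert false) ((y - sm) / (sp - sm)) Sy); cbn; [lra| field; lra].
  - apply (G (Vert true) ((y - sm) / (sp - sm)) Sy); cbn; [lra| field; lra].
  - apply (G (Horiz false) ((x - mum) / (mup - mum)) Sx); cbn; [field; lra| lra].
  - apply (G (Horiz true) ((x - mum) / (mup - mum)) Sx); cbn; [field; lra| lra].
Qed.

Theorem mainTheorem6 (mum mup sm sp h0 h1 : R)
  (Hmu : 0 < mum < mup) (Hsig : 0 < sm < sp)
  (Hh0 : h0 <> 0) (Hh1 : h1 <> 0)
  (Hpos : forall x y, inD mum mup sm sp x y -> 0 < h0 * x + h1 * y) :
  (* each t_{ab} minimizes phi_{ab} on [0,1] *)
  (forall k : side,
     0 <= tab mum mup sm sp h0 h1 k <= 1 /\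
     forall s, 0 <= s <= 1 ->
       phi mum mup sm sp h0 h1 k (tab mum mup sm sp h0 h1 k)
       <= phi mum mup sm sp h0 h1 k s) /\
  (* min over D of psi equals the minimum of the four values *)
  ((forall x y, inD mum mup sm sp x y ->
      minval mum mup sm sp h0 h1 <= psi mum mup sm sp h0 h1 x y) /\
   (exists x y, inD mum mup sm sp x y /\
      psi mum mup sm sp h0 h1 x y = minval mum mup sm sp h0 h1)) /\
  (* a side attaining the minimum yields a minimizer of psi on D *)
  (forall k : side,
     phi mum mup sm sp h0 h1 k (tab mum mup sm sp h0 h1 k) = minval mum mup sm sp h0 h1 ->
     let p := bpoint mum mup sm sp k (tab mum mup sm sp h0 h1 k) in
     inD mum mup sm sp (fst p) (snd p) /\
     forall x y, inD mum mup sm sp x y ->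
       psi mum mup sm sp h0 h1 (fst p) (snd p) <= psi mum mup sm sp h0 h1 x y).
Proof.
  assert (P1 := fun k => part1 mum mup sm sp h0 h1 k Hmu Hsig Hh0 Hh1).
  assert (P2 : forall x y, inD mum mup sm sp x y ->
      minval mum mup sm sp h0 h1 <= psi mum mup sm sp h0 h1 x y).
  { intros x y HD. destruct (reduce mum mup sm sp h0 h1 x y Hmu Hsig Hpos HD) as [x' [y' [HD' [Hb Hle]]]].
    eapply Rle_trans; [apply (boundary_ge mum mup sm sp h0 h1 x' y' Hmu Hsig Hh0 Hh1 HD' Hb)|exact Hle]. }
  split; [exact P1|]. split; [split; [exact P2|]|].
  - destruct (minval_att mum mup sm sp h0 h1) as [k Hk].
    destruct (P1 k) as [Ht _].
    exists (fst (bpoint mum mup sm sp k (tab mum mup sm sp h0 h1 k))),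
           (snd (bpoint mum mup sm sp k (tab mum mup sm sp h0 h1 k))).
    split; [apply bpoint_inD; assumption|]. exact Hk.
  - intros k Hk p. destruct (P1 k) as [Ht _]. split; [apply bpoint_inD; assumption|].
    intros x y HD. unfold p. change (psi mum mup sm sp h0 h1 (fst (bpoint mum mup sm sp k (tab mum mup sm sp h0 h1 k)))
      (snd (bpoint mum mup sm sp k (tab mum mup sm sp h0 h1 k)))) with (phi mum mup sm sp h0 h1 k (tab mum mup sm sp h0 h1 k)).
    rewrite Hk. apply P2; exact HD.
Qed.
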